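(* Let $\pi$ be a permutation-invariant probability density on $\mathbb{X}^n$ and $q$ a probability density on $\mathbb{X}$. For every $x\in\mathbb{X}^n$, $y\in\mathbb{X}$ and $i\in\{1,\dots,n\}$, $$\alpha_i^{\mathrm{IMwG}}(y,x)=\min\Big\{1,\frac{w_i(y,x)}{w_0(y,x)}\Big\}\le \alpha_i^{\mathrm{SOMA}}(y,x).$$
   Context: Permutation invariance: $\pi(x_{\sigma(1)},\dots,x_{\sigma(n)})=\pi(x)$ for all permutations $\sigma$. $[x_{-i},y]$ is $x$ with its $i$-th component replaced by $y$. Weights: $w_i(y,x)=\pi([x_{-i},y])/\big(q(y)\prod_{j\ne i}q(x_j)\big)$ for $1\le i\le n$, $w_0(y,x)=\pi(x)/\prod_{j=1}^n q(x_j)$, $W(y,x)=\sum_{i=1}^n w_i(y,x)$ (assumed well-defined and positive). The independent-Metropolis-within-Gibbs acceptance probability for replacing $x_i$ by $y$ is $\alpha_i^{\mathrm{IMwG}}(y,x)=\min\{1,\pi([x_{-i},y])q(x_i)/(\pi(x)q(y))\}$. The SOMA acceptance probability is $\alpha_i^{\mathrm{SOMA}}(y,x)=\min\{1,W(y,x)/(W(y,x)+w_0(y,x)-w_i(y,x))\}$. *)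

(* Defs.v *)
From HB Require Import structures.
From mathcomp Require Import all_boot all_order all_algebra all_fingroup.
From mathcomp Require Import all_classical all_reals.
Set Implicit Arguments. Unset Strict Implicit. Unset Printing Implicit Defensive.
Import Order.TTheory GRing.Theory Num.Theory.
Local Open Scope ring_scope.

(* Points of X^n are functions 'I_n -> X (components indexed 0..n-1). *)

Definition repl (X : Type) (n : nat) (x : 'I_n -> X) (i : 'I_n) (y : X) : 'I_n -> X :=
  fun k => if k == i then y else x k.

Definition perm_invariant (R : realType) (X : Type) (n : nat)
  (pi : ('I_n -> X) -> R) : Prop :=
  forall (s : 'S_n) (x : 'I_n -> X), pi (fun k => x (s k)) = pi x.

Definition w_i (R : realType) (X : Type) (n : nat) (pi : ('I_n -> X) -> R)
  (q : X -> R) (i : 'I_n) (y : X) (x : 'I_n -> X) : R :=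
  pi (repl x i y) / (q y * \prod_(j < n | j != i) q (x j)).

Definition w_0 (R : realType) (X : Type) (n : nat) (pi : ('I_n -> X) -> R)
  (q : X -> R) (y : X) (x : 'I_n -> X) : R :=
  pi x / \prod_(j < n) q (x j).

Definition W (R : realType) (X : Type) (n : nat) (pi : ('I_n -> X) -> R)
  (q : X -> R) (y : X) (x : 'I_n -> X) : R :=
  \sum_(i < n) w_i pi q i y x.

Definition alpha_IMwG (R : realType) (X : Type) (n : nat) (pi : ('I_n -> X) -> R)
  (q : X -> R) (i : 'I_n) (y : X) (x : 'I_n -> X) : R :=
  Num.min 1 (pi (repl x i y) * q (x i) / (pi x * q y)).

Definition alpha_SOMA (R : realType) (X : Type) (n : nat) (pi : ('I_n -> X) -> R)
  (q : X -> R) (i : 'I_n) (y : X) (x : 'I_n -> X) : R :=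
  Num.min 1 (W pi q y x / (W pi q y x + w_0 pi q y x - w_i pi q i y x)).

(* Main.v *)
Require Import Defs.
From HB Require Import structures.
From mathcomp Require Import all_boot all_order all_algebra all_fingroup.
From mathcomp Require Import all_classical all_reals.
From mathcomp Require Import ring lra.
Import Order.TTheory GRing.Theory Num.Theory.
Local Open Scope ring_scope.

Lemma key (R : realType) (a b S : R) : 0 <= a -> 0 <= b -> 0 <= S ->
  Num.min 1 (a / b) <= Num.min 1 ((a + S) / (b + S)).
Proof.
move=> a0 b0 S0.
have [->|bn0] := eqVneq b 0.
  rewrite invr0 mulr0 le_min ge_min lexx /=.
  rewrite ge_min; apply/orP; right.
  by apply: divr_ge0; lra.
have bp : 0 < b by rewrite lt_def bn0 b0.
have bSp : 0 < b + S by lra.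
rewrite le_min ge_min lexx /=.
have [ab|ab] := leP b a.
  rewrite ge_min; apply/orP; left.
  rewrite ler_pdivlMr // mul1r; lra.
rewrite ge_min; apply/orP; right.
rewrite ler_pdivrMr // mulrAC ler_pdivlMr //.
nra.
Qed.

Theorem theorem2 (R : realType) (X : Type) (n : nat)
  (pi : ('I_n -> X) -> R) (q : X -> R)
  (pi_ge0 : forall z, 0 <= pi z) (q_ge0 : forall t, 0 <= q t)
  (pi_perm : perm_invariant pi)
  (x : 'I_n -> X) (y : X) (i : 'I_n)
  (qy_gt0 : 0 < q y) (qx_gt0 : forall j, 0 < q (x j))
  (W_gt0 : 0 < W pi q y x) :
  alpha_IMwG pi q i y x = Num.min 1 (w_i pi q i y x / w_0 pi q y x) /\
  alpha_IMwG pi q i y x <= alpha_SOMA pi q i y x.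
Proof.
have Pi0 : 0 < \prod_(j < n | j != i) q (x j) by apply: prodr_gt0.
have eq1 : alpha_IMwG pi q i y x = Num.min 1 (w_i pi q i y x / w_0 pi q y x).
  have PE : \prod_(j < n) q (x j) = q (x i) * \prod_(j < n | j != i) q (x j)
    by rewrite (bigD1 i).
  rewrite /alpha_IMwG /w_i /w_0 PE.
  congr (Num.min 1 _).
  rewrite !invfM invrK.
  have := lt0r_neq0 Pi0; have := lt0r_neq0 qy_gt0; have := lt0r_neq0 (qx_gt0 i).
  move=> h1 h2 h3.
  rewrite invrK; set ip := (pi x)^-1; field.
  by rewrite h3 h2.
split => //.
rewrite eq1 /alpha_SOMA.
have wge0 : forall j, 0 <= w_i pi q j y x.
  move=> j; rewrite /w_i; apply: divr_ge0 => //.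
  apply: mulr_ge0; [exact: ltW | apply: prodr_ge0 => k _; exact: ltW].
set S := \sum_(j < n | j != i) w_i pi q j y x.
have WE : W pi q y x = w_i pi q i y x + S by rewrite /W (bigD1 i).
have S0 : 0 <= S by apply: sumr_ge0.
have -> : W pi q y x + w_0 pi q y x - w_i pi q i y x = w_0 pi q y x + S.
  have E : forall a b c : R, a + c + b - a = b + c by move=> a b c; lra.
  by rewrite WE E.
have w00 : 0 <= w_0 pi q y x.
  rewrite /w_0; apply: divr_ge0 => //; apply: prodr_ge0 => k _; exact: ltW.
rewrite WE; exact: (@key R _ _ _ (wge0 i) w00 S0).
Qed.
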